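(* Let $\rho>0$ be irrational and $p>0$. Suppose that complex numbers $a_{k,\ell,m}$, indexed by integers $k\ge1$, $\ell\ge m\ge0$ with $k\rho+\ell+1<p$, satisfy $$\sum_{\substack{k\ge1,\ \ell\ge m\ge0\\ k\rho+\ell+1<p}}a_{k,\ell,m}\frac{(\log n)^m}{n^{k\rho+\ell+1}}=\mathcal O(n^{-p})\quad(n\to\infty).$$ Then $a_{k,\ell,m}=0$ for all such triples $(k,\ell,m)$. *)

(* Defs.v *)
From Stdlib Require Import Reals QArith.
From Coquelicot Require Import Coquelicot.
Open Scope R_scope.

Definition irrational (x : R) : Prop := forall q : Q, x <> Q2R q.

Definition admissible (rho p : R) (k l m : nat) : Prop :=
  (1 <= k)%nat /\ (m <= l)%nat /\ INR k * rho + INR l + 1 < p.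

(* A bound B such that every admissible triple has k, l <= B
   (when rho > 0): k < p/rho and l < p. *)
Definition bound (rho p : R) : nat :=
  (Z.to_nat (up (p / rho)) + Z.to_nat (up p))%nat.

Definition term (rho : R) (a : nat -> nat -> nat -> C) (k l m n : nat) : C :=
  a k l m * RtoC ((ln (INR n)) ^ m / Rpower (INR n) (INR k * rho + INR l + 1)).

Definition adm_sum (rho p : R) (a : nat -> nat -> nat -> C) (n : nat) : C :=
  sum_n (fun k =>
    sum_n (fun l =>
      sum_n (fun m =>
        if (Nat.leb 1 k && Nat.leb m l)%bool then
          if Rlt_dec (INR k * rho + INR l + 1) p then term rho a k l m n
          else RtoC 0
        else RtoC 0) l) (bound rho p)) (bound rho p).

(* Main.v *)
Require Import Defs.
From Stdlib Require Import Reals QArith.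
From Stdlib Require Import Qreals Lra Lia ZArith List FunctionalExtensionality.
From Coquelicot Require Import Coquelicot.
Open Scope R_scope.
Lemma exp_pow_INR (a : R) (j : nat) : exp a ^ j = exp (INR j * a).
Proof.
  induction j as [|j IH].
  - simpl. rewrite Rmult_0_l, exp_0. reflexivity.
  - rewrite S_INR. simpl pow. rewrite IH. rewrite <- exp_plus. f_equal. ring.
Qed.

Lemma exp_le' (x y : R) : x <= y -> exp x <= exp y.
Proof. intros [H|H]. left; apply exp_increasing; auto. subst; lra. Qed.

Lemma ev_gt (X : R) : eventually (fun n : nat => X < INR n).
Proof.
  destruct (archimed (Rabs X)) as [H1 _].
  exists (Z.to_nat (up (Rabs X))). intros n Hn.
  apply le_INR in Hn.
  assert (0 <= Rabs X) by apply Rabs_pos.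
  assert (Hz : (0 <= up (Rabs X))%Z). { apply le_IZR. lra. }
  rewrite INR_IZR_INZ, Z2Nat.id in Hn; auto.
  pose proof (Rle_abs X). lra.
Qed.

Lemma lim_rpow_neg (s : R) : 0 < s ->
  is_lim_seq (fun n : nat => Rpower (INR n) (- s)) 0.
Proof.
  intros Hs. apply is_lim_seq_spec. intros eps.
  set (X := exp (- ln eps / s)).
  assert (HX : 0 < X) by apply exp_pos.
  generalize (ev_gt X). apply filter_imp. intros n Hn.
  rewrite Rminus_0_r. unfold Rpower.
  rewrite Rabs_pos_eq; [| left; apply exp_pos].
  assert (Hl : ln X < ln (INR n)) by (apply ln_increasing; lra).
  unfold X in Hl. rewrite ln_exp in Hl.
  replace (pos eps) with (exp (ln eps)) by (apply exp_ln; apply cond_pos).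
  apply exp_increasing.
  unfold Rdiv in Hl.
  apply Rmult_lt_compat_l with (r := s) in Hl; [|lra].
  replace (s * (- ln eps * / s)) with (- ln eps) in Hl by (field; lra). nra.
Qed.

Lemma lim_inv_ln : is_lim_seq (fun n : nat => / ln (INR n)) 0.
Proof.
  apply is_lim_seq_spec. intros eps.
  pose proof (cond_pos eps) as He.
  generalize (ev_gt (exp (/ eps))). apply filter_imp. intros n Hn.
  assert (Hl : ln (exp (/ eps)) < ln (INR n)) by (apply ln_increasing; [apply exp_pos| lra]).
  rewrite ln_exp in Hl.
  assert (0 < / eps) by (apply Rinv_0_lt_compat; lra).
  rewrite Rminus_0_r, Rabs_pos_eq; [| left; apply Rinv_0_lt_compat; lra].
  replace (pos eps) with (/ / eps) by (field; lra).
  apply Rinv_lt_contravar; nra.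
Qed.

Lemma lim_ln_pow (j : nat) (d : R) : 0 < d ->
  is_lim_seq (fun n : nat => ln (INR n) ^ j / Rpower (INR n) d) 0.
Proof.
  intros Hd.
  set (e := d / (2 * (INR j + 1))).
  assert (He : 0 < e). { unfold e. pose proof (pos_INR j). apply Rdiv_lt_0_compat; lra. }
  assert (Hje : INR j * e <= d / 2).
  { unfold e. pose proof (pos_INR j).
    apply Rmult_le_reg_r with (2 * (INR j + 1)); [lra|].
    field_simplify; [|lra]. nra. }
  apply is_lim_seq_le_le_loc with (u := fun _ => 0)
    (w := fun n => / e ^ j * Rpower (INR n) (- (d/2))).
  - generalize (ev_gt 1). apply filter_imp. intros n Hn.
    assert (Hl : 0 < ln (INR n)). { rewrite <- ln_1. apply ln_increasing; lra. }
    assert (Hp : 0 < Rpower (INR n) d) by (unfold Rpower; apply exp_pos).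
    split.
    + apply Rdiv_le_0_compat; [apply pow_le; lra | lra].
    + assert (H1 : e * ln (INR n) <= exp (e * ln (INR n))).
      { pose proof (exp_ineq1_le (e * ln (INR n))). lra. }
      assert (H2 : ln (INR n) <= exp (e * ln (INR n)) / e).
      { apply Rmult_le_reg_l with e; [lra|]. field_simplify; lra. }
      assert (H3 : ln (INR n) ^ j <= (exp (e * ln (INR n)) / e) ^ j).
      { apply pow_incr; lra. }
      unfold Rdiv in H3. rewrite Rpow_mult_distr, pow_inv, exp_pow_INR in H3.
      unfold Rpower. unfold Rdiv.
      rewrite Rmult_comm.
      apply Rle_trans with (/ exp (d * ln (INR n)) * (exp (INR j * (e * ln (INR n))) * / e ^ j)).
      { apply Rmult_le_compat_l; [left; apply Rinv_0_lt_compat, exp_pos | exact H3]. }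
      rewrite <- exp_Ropp.
      replace (exp (- (d * ln (INR n))) * (exp (INR j * (e * ln (INR n))) * / e ^ j))
        with (/ e ^ j * exp (INR j * (e * ln (INR n)) + - (d * ln (INR n))))
        by (rewrite exp_plus; ring).
      apply Rmult_le_compat_l.
      { left. apply Rinv_0_lt_compat, pow_lt; lra. }
      apply exp_le'. nra.
  - apply is_lim_seq_const.
  - replace (Finite 0) with (Rbar_mult (/ e ^ j) 0) by (simpl; f_equal; ring).
    apply is_lim_seq_scal_l. apply lim_rpow_neg. lra.
Qed.

Section Lists.
Context {I : Type}.

Definition lsum (f : I -> C) (l : list I) : C :=
  fold_right (fun i acc => Cplus (f i) acc) (RtoC 0) l.
Definition rlsum (f : I -> R) (l : list I) : R :=
  fold_right (fun i acc => f i + acc) 0 l.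

Lemma lsum_ext (f g : I -> C) l : (forall i, In i l -> f i = g i) -> lsum f l = lsum g l.
Proof.
  induction l as [|x t IH]; intros H; simpl; auto.
  rewrite H by (left; auto). rewrite IH; auto. intros; apply H; right; auto.
Qed.

Lemma lsum_filter (f : I -> C) q l :
  lsum f (List.filter q l) = lsum (fun i => if q i then f i else RtoC 0) l.
Proof.
  induction l as [|x t IH]; simpl; auto.
  destruct (q x); simpl; rewrite IH; auto. rewrite Cplus_0_l; auto.
Qed.

Lemma lsum_split (f : I -> C) (q : I -> bool) l :
  lsum f l = Cplus (lsum (fun i => if q i then f i else RtoC 0) l)
                   (lsum (fun i => if q i then RtoC 0 else f i) l).
Proof.
  induction l as [|x t IH]; simpl.
  - rewrite Cplus_0_l; auto.
  - rewrite IH. destruct (q x); ring.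
Qed.

Lemma lsum_mult_r (f : I -> C) (x : C) l :
  Cmult (lsum f l) x = lsum (fun i => Cmult (f i) x) l.
Proof.
  induction l as [|y t IH]; simpl.
  - apply Cmult_0_l.
  - rewrite <- IH. ring.
Qed.

Lemma lsum_zero l : lsum (fun _ => RtoC 0) l = RtoC 0.
Proof. induction l; simpl; auto. rewrite IHl; apply Cplus_0_l. Qed.

Lemma Cmod_lsum (f : I -> C) l : Cmod (lsum f l) <= rlsum (fun i => Cmod (f i)) l.
Proof.
  induction l as [|y t IH]; simpl.
  - rewrite Cmod_0; lra.
  - eapply Rle_trans; [apply Cmod_triangle|]. lra.
Qed.

Lemma rlsum_le (f g : I -> R) l : (forall i, In i l -> f i <= g i) -> rlsum f l <= rlsum g l.
Proof.
  induction l as [|x t IH]; intros H; simpl; [lra|].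
  assert (f x <= g x) by (apply H; left; auto).
  assert (rlsum f t <= rlsum g t) by (apply IH; intros; apply H; right; auto). lra.
Qed.

Lemma rlsum_mult_r (f : I -> R) x l : rlsum f l * x = rlsum (fun i => f i * x) l.
Proof. induction l; simpl; [ring|]. rewrite <- IHl. ring. Qed.

Lemma lim_rlsum (u : I -> nat -> R) l :
  (forall i, In i l -> is_lim_seq (u i) 0) ->
  is_lim_seq (fun n => rlsum (fun i => u i n) l) 0.
Proof.
  induction l as [|x t IH]; intros H; simpl.
  - apply is_lim_seq_const.
  - replace 0 with (0 + 0) by ring. apply is_lim_seq_plus'.
    + apply H; left; auto.
    + apply IH; intros; apply H; right; auto.
Qed.

End Lists.

Lemma lim_scal0 (u : nat -> R) (a : R) : is_lim_seq u 0 -> is_lim_seq (fun n => a * u n) 0.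
Proof.
  intros H. replace (Finite 0) with (Rbar_mult a 0) by (simpl; f_equal; ring).
  apply is_lim_seq_scal_l; auto.
Qed.

Lemma ln_gt1 (x : R) : 3 < x -> 1 < ln x.
Proof.
  intros H. pose proof exp_le_3. rewrite <- (ln_exp 1).
  apply ln_increasing; [apply exp_pos | lra].
Qed.

Lemma Rpower_pos' (x y : R) : 0 < Rpower x y.
Proof. unfold Rpower; apply exp_pos. Qed.

Section Main.
Context {I : Type} (e : I -> R) (mm : I -> nat) (p : R).

Definition gg (i : I) (n : nat) : R := ln (INR n) ^ mm i / Rpower (INR n) (e i).
Definition sel (E : R) (Mx : nat) (i : I) : bool :=
  if Req_EM_T (e i) E then Nat.eqb (mm i) Mx else false.
Definition hh (E : R) (Mx : nat) (n : nat) : R := Rpower (INR n) E / ln (INR n) ^ Mx.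

Lemma vlim i E Mx : (E < e i \/ (E = e i /\ (mm i <= Mx)%nat)) -> sel E Mx i = false ->
  is_lim_seq (fun n => gg i n * hh E Mx n) 0.
Proof.
  intros Hc Hs. unfold gg, hh.
  destruct Hc as [Hlt | [Heq Hle]].
  - apply is_lim_seq_le_le_loc with (u := fun _ => 0)
      (w := fun n => ln (INR n) ^ mm i / Rpower (INR n) (e i - E)).
    + generalize (ev_gt 3). apply filter_imp. intros n Hn.
      pose proof (ln_gt1 _ Hn) as HL.
      set (L := ln (INR n)) in *.
      assert (H1 : 1 <= L ^ Mx) by (apply pow_R1_Rle; lra).
      assert (H0 : 0 <= L ^ mm i) by (apply pow_le; lra).
      pose proof (Rpower_pos' (INR n) E). pose proof (Rpower_pos' (INR n) (e i)).
      pose proof (Rpower_pos' (INR n) (e i - E)).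
      assert (HA : Rpower (INR n) (e i) = Rpower (INR n) (e i - E) * Rpower (INR n) E).
      { rewrite <- Rpower_plus. f_equal. ring. }
      set (A := L ^ mm i / Rpower (INR n) (e i - E)).
      assert (HA0 : 0 <= A) by (unfold A; apply Rdiv_le_0_compat; lra).
      replace (L ^ mm i / Rpower (INR n) (e i) * (Rpower (INR n) E / L ^ Mx))
        with (A * / L ^ Mx) by (unfold A; rewrite HA; field; lra).
      split.
      * apply Rmult_le_pos; auto. left; apply Rinv_0_lt_compat; lra.
      * rewrite <- (Rmult_1_r A) at 2. apply Rmult_le_compat_l; auto.
        rewrite <- Rinv_1. apply Rinv_le_contravar; lra.
    + apply is_lim_seq_const.
    + apply lim_ln_pow. lra.
  - assert (Hne : mm i <> Mx).
    { unfold sel in Hs. destruct (Req_EM_T (e i) E); [|lra].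
      apply Nat.eqb_neq; auto. }
    apply is_lim_seq_le_le_loc with (u := fun _ => 0) (w := fun n => / ln (INR n)).
    + generalize (ev_gt 3). apply filter_imp. intros n Hn.
      pose proof (ln_gt1 _ Hn) as HL.
      set (L := ln (INR n)) in *.
      rewrite <- Heq.
      pose proof (Rpower_pos' (INR n) E).
      assert (HM : L ^ Mx = L ^ mm i * L ^ (Mx - mm i)).
      { rewrite <- pow_add. f_equal. lia. }
      assert (Hk : L <= L ^ (Mx - mm i)).
      { rewrite <- (pow_1 L) at 1. apply Rle_pow; [lra| lia]. }
      assert (0 < L ^ mm i) by (apply pow_lt; lra).
      assert (0 < L ^ (Mx - mm i)) by (apply pow_lt; lra).
      replace (L ^ mm i / Rpower (INR n) E * (Rpower (INR n) E / L ^ Mx))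
        with (/ L ^ (Mx - mm i)) by (rewrite HM; field; repeat split; lra).
      split.
      * left; apply Rinv_0_lt_compat; lra.
      * apply Rinv_le_contravar; lra.
    + apply is_lim_seq_const.
    + apply lim_inv_ln.
Qed.


Definition OH (c : I -> C) (l : list I) : Prop :=
  exists (M : R) (N : nat), forall n : nat, (N <= n)%nat ->
    Cmod (lsum (fun i => Cmult (c i) (RtoC (gg i n))) l) <= M * Rpower (INR n) (- p).

Lemma key (c : I -> C) (l : list I) (i0 : I) :
  In i0 l ->
  (forall j, In j l -> e i0 < e j \/ (e i0 = e j /\ (mm j <= mm i0)%nat)) ->
  e i0 < p -> OH c l ->
  lsum (fun i => if sel (e i0) (mm i0) i then c i else RtoC 0) l = RtoC 0.
Proof.
  intros Hin Hmin Hp [M [N HO]].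
  set (E := e i0) in *. set (Mx := mm i0) in *.
  set (G := lsum (fun i => if sel E Mx i then c i else RtoC 0) l).
  set (w := fun n => Rabs M * Rpower (INR n) (- (p - E)) +
     rlsum (fun i => if sel E Mx i then 0 else Cmod (c i) * (gg i n * hh E Mx n)) l).
  assert (Hw : is_lim_seq w 0).
  { unfold w.
    assert (H1 : is_lim_seq (fun n => Rabs M * Rpower (INR n) (- (p - E))) 0).
    { apply lim_scal0. apply lim_rpow_neg. lra. }
    assert (H2 : is_lim_seq (fun n => rlsum (fun i => if sel E Mx i then 0 else Cmod (c i) * (gg i n * hh E Mx n)) l) 0).
    { apply (lim_rlsum (fun i n => if sel E Mx i then 0 else Cmod (c i) * (gg i n * hh E Mx n))).
      intros i Hi. destruct (sel E Mx i) eqn:Hs.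
      + apply is_lim_seq_const.
      + apply lim_scal0. apply vlim; auto. }
    pose proof (is_lim_seq_plus' _ _ 0 0 H1 H2) as H3. rewrite Rplus_0_r in H3. exact H3. }
  assert (Hev : eventually (fun n => Cmod G <= w n)).
  { assert (HN : eventually (fun n : nat => (N <= n)%nat)) by (exists N; auto).
    generalize (filter_and _ _ HN (ev_gt 3)). apply filter_imp.
    intros n [HNn Hn].
    pose proof (ln_gt1 _ Hn) as HL.
    set (x := INR n) in *. set (L := ln x) in *.
    assert (H1 : 1 <= L ^ Mx) by (apply pow_R1_Rle; lra).
    pose proof (Rpower_pos' x E) as HPE.
    assert (Hgg : forall i, 0 <= gg i n).
    { intros i. unfold gg. apply Rdiv_le_0_compat. apply pow_le. fold x L. lra. apply Rpower_pos'. }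
    assert (Hh : 0 < hh E Mx n) by (unfold hh; fold x L; apply Rdiv_lt_0_compat; lra).
    assert (Hgh : gg i0 n * hh E Mx n = 1).
    { unfold gg, hh. fold x L E Mx. field. lra. }
    set (S := lsum (fun i => Cmult (c i) (RtoC (gg i n))) l).
    set (Rm := lsum (fun i => if sel E Mx i then RtoC 0 else Cmult (c i) (RtoC (gg i n))) l).
    assert (HS : S = Cplus (Cmult G (RtoC (gg i0 n))) Rm).
    { unfold S, Rm. rewrite (lsum_split _ (sel E Mx)). f_equal.
      unfold G. rewrite lsum_mult_r. apply lsum_ext. intros i _.
      destruct (sel E Mx i) eqn:Hs.
      - unfold sel in Hs. destruct (Req_EM_T (e i) E) as [He|]; [|discriminate].
        apply Nat.eqb_eq in Hs. unfold gg. rewrite He, Hs. reflexivity.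
      - rewrite Cmult_0_l. reflexivity. }
    assert (HG : G = Cmult (Cminus S Rm) (RtoC (hh E Mx n))).
    { rewrite HS. transitivity (Cmult G (RtoC (gg i0 n * hh E Mx n))).
      - rewrite Hgh. ring.
      - rewrite RtoC_mult. ring. }
    assert (HRm : Cmod Rm <= rlsum (fun i => if sel E Mx i then 0 else Cmod (c i) * gg i n) l).
    { eapply Rle_trans; [apply Cmod_lsum|]. apply rlsum_le. intros i _.
      destruct (sel E Mx i). rewrite Cmod_0; lra.
      rewrite Cmod_mult, Cmod_R, Rabs_pos_eq; auto. lra. }
    assert (HSb : Cmod S <= M * Rpower x (- p)) by (apply HO; auto).
    rewrite HG, Cmod_mult, Cmod_R, Rabs_pos_eq by lra.
    assert (HSR : Cmod (Cminus S Rm) <= Cmod S + Cmod Rm).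
    { unfold Cminus. eapply Rle_trans; [apply Cmod_triangle|]. rewrite Cmod_opp. lra. }
    apply Rle_trans with ((M * Rpower x (- p) + rlsum (fun i => if sel E Mx i then 0 else Cmod (c i) * gg i n) l) * hh E Mx n).
    { apply Rmult_le_compat_r; lra. }
    unfold w. fold x. rewrite Rmult_plus_distr_r. apply Rplus_le_compat.
    - pose proof (Rpower_pos' x (-p)).
      assert (HP : Rpower x (- p) * hh E Mx n = Rpower x (- (p - E)) / L ^ Mx).
      { unfold hh. fold x L. unfold Rdiv. rewrite <- Rmult_assoc, <- Rpower_plus.
        replace (- p + E) with (- (p - E)) by ring. reflexivity. }
      rewrite Rmult_assoc, HP.
      pose proof (Rpower_pos' x (- (p - E))).
      apply Rle_trans with (Rabs M * (Rpower x (- (p - E)) / L ^ Mx)).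
      + apply Rmult_le_compat_r. apply Rdiv_le_0_compat; lra. apply Rle_abs.
      + apply Rmult_le_compat_l. apply Rabs_pos.
        unfold Rdiv. rewrite <- (Rmult_1_r (Rpower x (- (p - E)))) at 2.
        apply Rmult_le_compat_l; [lra|]. rewrite <- Rinv_1. apply Rinv_le_contravar; lra.
    - rewrite rlsum_mult_r. apply rlsum_le. intros i _. destruct (sel E Mx i); right; ring. }
  pose proof (is_lim_seq_le_loc _ _ _ _ Hev (is_lim_seq_const (Cmod G)) Hw) as Hle.
  simpl in Hle. apply Cmod_eq_0. pose proof (Cmod_ge_0 G). lra.
Qed.


Lemma lexmin (l : list I) : l <> nil ->
  exists i, In i l /\ forall j, In j l -> e i < e j \/ (e i = e j /\ (mm j <= mm i)%nat).
Proof.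
  induction l as [|x t IH]; intros Hne; [congruence|].
  destruct t as [|y t'].
  - exists x. split; [left; auto|]. intros j [<-|[]]. right; split; auto.
  - destruct IH as [i [Hi Hm]]; [discriminate|].
    destruct (total_order_T (e x) (e i)) as [[Hlt|Heq]|Hgt].
    + exists x. split; [left; auto|]. intros j [<-|Hj]; [right; split; auto|].
      destruct (Hm j Hj) as [H|[H _]]; left; lra.
    + destruct (le_lt_dec (mm i) (mm x)).
      * exists x. split; [left; auto|]. intros j [<-|Hj]; [right; split; auto|].
        destruct (Hm j Hj) as [H|[H H']]; [left; lra| right; split; [lra|lia]].
      * exists i. split; [right; auto|]. intros j [<-|Hj]; [right; split; [lra|lia] | apply Hm; auto].
    + exists i. split; [right;auto|]. intros j [<-|Hj]; [left; lra| apply Hm; auto].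
Qed.

Lemma filter_length_lt {A : Type} (q : A -> bool) (l : list A) (a : A) :
  In a l -> q a = false -> (length (List.filter q l) < length l)%nat.
Proof.
  induction l as [|x t IH]; intros Hin Hq; [destruct Hin|].
  pose proof (filter_length_le q t) as Hle.
  destruct Hin as [<-|Hin]; simpl.
  - rewrite Hq. lia.
  - destruct (q x); simpl; [specialize (IH Hin Hq)|]; lia.
Qed.

Lemma Lmain : forall (len : nat) (l : list I) (c : I -> C), (length l <= len)%nat ->
  (forall i, In i l -> e i < p) -> OH c l ->
  forall E Mx, lsum (fun i => if sel E Mx i then c i else RtoC 0) l = RtoC 0.
Proof.
  induction len as [|len IH]; intros l c Hlen Hlt HO E Mx.
  - destruct l; [reflexivity| simpl in Hlen; lia].
  - destruct l as [|x t]; [reflexivity|].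
    set (l := x :: t) in *.
    destruct (lexmin l) as [i0 [Hi0 Hm]]; [discriminate|].
    set (E0 := e i0) in *. set (M0 := mm i0) in *.
    assert (HG0 : lsum (fun i => if sel E0 M0 i then c i else RtoC 0) l = RtoC 0).
    { apply key; auto. }
    set (l' := List.filter (fun i => negb (sel E0 M0 i)) l).
    assert (Hs0 : sel E0 M0 i0 = true).
    { unfold sel. destruct (Req_EM_T (e i0) E0) as [_|n]; [apply Nat.eqb_eq; auto| unfold E0 in n; lra]. }
    assert (Hlen' : (length l' <= len)%nat).
    { pose proof (filter_length_lt (fun i => negb (sel E0 M0 i)) l i0 Hi0) as H.
      cbv beta in H. rewrite Hs0 in H. specialize (H eq_refl). fold l' in H. lia. }
    assert (Hlt' : forall i, In i l' -> e i < p).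
    { intros i Hi. apply filter_In in Hi. apply Hlt, Hi. }
    assert (HO' : OH c l').
    { destruct HO as [M [N HO]]. exists M, N. intros n Hn.
      specialize (HO n Hn).
      rewrite (lsum_split _ (sel E0 M0)) in HO.
      assert (Hz : lsum (fun i => if sel E0 M0 i then Cmult (c i) (RtoC (gg i n)) else RtoC 0) l = RtoC 0).
      { transitivity (Cmult (lsum (fun i => if sel E0 M0 i then c i else RtoC 0) l) (RtoC (gg i0 n))).
        - rewrite lsum_mult_r. apply lsum_ext. intros i _.
          destruct (sel E0 M0 i) eqn:Hs.
          + unfold sel in Hs. destruct (Req_EM_T (e i) E0) as [He|]; [|discriminate].
            apply Nat.eqb_eq in Hs. unfold gg. rewrite He, Hs. reflexivity.
          + rewrite Cmult_0_l. reflexivity.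
        - rewrite HG0. apply Cmult_0_l. }
      rewrite Hz, Cplus_0_l in HO. unfold l'. rewrite lsum_filter.
      assert (Heq : lsum (fun i => if negb (sel E0 M0 i) then Cmult (c i) (RtoC (gg i n)) else RtoC 0) l
        = lsum (fun i => if sel E0 M0 i then RtoC 0 else Cmult (c i) (RtoC (gg i n))) l).
      { apply lsum_ext. intros i _. destruct (sel E0 M0 i); reflexivity. }
      rewrite Heq. exact HO. }
    specialize (IH l' c Hlen' Hlt' HO' E Mx).
    rewrite (lsum_split _ (sel E0 M0)).
    replace (lsum (fun i => if sel E0 M0 i then RtoC 0 else if sel E Mx i then c i else RtoC 0) l)
      with (lsum (fun i => if sel E Mx i then c i else RtoC 0) l').
    2:{ unfold l'. rewrite lsum_filter. apply lsum_ext. intros i _. destruct (sel E0 M0 i); reflexivity. }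
    rewrite IH, Cplus_0_r.
    destruct (Req_EM_T E E0) as [HE|HE]; [destruct (Nat.eq_dec Mx M0) as [HM|HM]|].
    + subst. etransitivity; [|exact HG0]. apply lsum_ext. intros i _. destruct (sel E0 M0 i); reflexivity.
    + etransitivity; [|apply (lsum_zero l)]. apply lsum_ext. intros i _.
      destruct (sel E0 M0 i) eqn:H0; [|reflexivity].
      destruct (sel E Mx i) eqn:H1; [|reflexivity]. exfalso.
      unfold sel in H0, H1. destruct (Req_EM_T (e i) E0); [|discriminate].
      destruct (Req_EM_T (e i) E); [|discriminate].
      apply Nat.eqb_eq in H0, H1. lia.
    + etransitivity; [|apply (lsum_zero l)]. apply lsum_ext. intros i _.
      destruct (sel E0 M0 i) eqn:H0; [|reflexivity].
      destruct (sel E Mx i) eqn:H1; [|reflexivity]. exfalso.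
      unfold sel in H0, H1. destruct (Req_EM_T (e i) E0); [|discriminate].
      destruct (Req_EM_T (e i) E); [|discriminate]. lra.
Qed.

End Main.

Lemma lsum_app {I : Type} (f : I -> C) l1 l2 : lsum f (l1 ++ l2) = Cplus (lsum f l1) (lsum f l2).
Proof. induction l1; simpl. rewrite Cplus_0_l; auto. rewrite IHl1. ring. Qed.

Lemma lsum_flat_map {A B : Type} (f : B -> C) (h : A -> list B) s :
  lsum f (flat_map h s) = lsum (fun x => lsum f (h x)) s.
Proof. induction s; simpl; auto. rewrite lsum_app, IHs. reflexivity. Qed.

Lemma lsum_map {A B : Type} (f : B -> C) (h : A -> B) s :
  lsum f (map h s) = lsum (fun x => f (h x)) s.
Proof. induction s; simpl; auto. rewrite IHs. reflexivity. Qed.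

Lemma lsum_seq (f : nat -> C) N : lsum f (seq 0 (S N)) = sum_n f N.
Proof.
  induction N.
  - simpl. rewrite sum_O. apply Cplus_0_r.
  - rewrite seq_S, lsum_app, IHN, sum_Sn. simpl. rewrite Cplus_0_r. reflexivity.
Qed.

Lemma sum_n_zero_loc (F : nat -> C) N : (forall i, (i <= N)%nat -> F i = RtoC 0) -> sum_n F N = RtoC 0.
Proof.
  induction N; intros H.
  - rewrite sum_O. apply H; lia.
  - rewrite sum_Sn, IHN by (intros; apply H; lia). rewrite H by lia.
    apply Cplus_0_r.
Qed.

Lemma sum_n_delta (F : nat -> C) k N : (forall i, i <> k -> F i = RtoC 0) -> (k <= N)%nat ->
  sum_n F N = F k.
Proof.
  induction N; intros H Hk.
  - rewrite sum_O. f_equal. lia.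
  - rewrite sum_Sn. destruct (Nat.eq_dec k (S N)) as [->|Hne].
    + rewrite sum_n_zero_loc. apply Cplus_0_l. intros; apply H; lia.
    + rewrite IHN by (auto; lia). rewrite (H (S N)) by auto. apply Cplus_0_r.
Qed.

Lemma irr_inj (rho : R) k l k' l' : irrational rho ->
  INR k * rho + INR l = INR k' * rho + INR l' -> k = k' /\ l = l'.
Proof.
  intros Hirr H.
  destruct (Nat.eq_dec k k') as [->|Hne].
  - split; auto. apply INR_eq. lra.
  - exfalso.
    assert (Hd : INR k - INR k' <> 0).
    { intro H0. apply Hne. apply INR_eq. lra. }
    apply (Hirr (inject_Z (Z.of_nat l' - Z.of_nat l) / inject_Z (Z.of_nat k - Z.of_nat k'))%Q).
    rewrite Q2R_div.
    + unfold Q2R, inject_Z. simpl. rewrite !minus_IZR, <- !INR_IZR_INZ.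
      apply Rmult_eq_reg_r with (INR k - INR k'); auto. field_simplify; auto. rewrite (Rmult_comm rho (INR k)), (Rmult_comm rho (INR k')). lra.
    + intro H0. apply Hne. apply (proj1 (inject_Z_injective _ 0%Z)) in H0. lia.
Qed.

Definition T3 := (nat * nat * nat)%type.
Definition ee (rho : R) (t : T3) : R := let '(k, l, m) := t in INR k * rho + INR l + 1.
Definition mmf (t : T3) : nat := let '(_, _, m) := t in m.
Definition cc (a : nat -> nat -> nat -> C) (t : T3) : C := let '(k, l, m) := t in a k l m.
Definition condb (rho p : R) (t : T3) : bool :=
  let '(k, l, m) := t in
  ((Nat.leb 1 k && Nat.leb m l) && (if Rlt_dec (INR k * rho + INR l + 1) p then true else false))%bool.
Definition Lfull (B : nat) : list T3 :=
  flat_map (fun k => flat_map (fun l => map (fun m => (k, l, m)) (seq 0 (S l))) (seq 0 (S B))) (seq 0 (S B)).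

Lemma adm_eq rho p a n :
  adm_sum rho p a n =
  lsum (fun t => Cmult (cc a t) (RtoC (gg (ee rho) mmf t n))) (List.filter (condb rho p) (Lfull (Defs.bound rho p))).
Proof.
  rewrite lsum_filter. unfold Lfull. rewrite lsum_flat_map, lsum_seq.
  unfold adm_sum. apply sum_n_ext. intro k. rewrite lsum_flat_map, lsum_seq.
  apply sum_n_ext. intro l. rewrite lsum_map, lsum_seq. apply sum_n_ext. intro m.
  unfold condb, cc, ee, mmf, term, gg.
  destruct (Nat.leb 1 k), (Nat.leb m l); simpl; try reflexivity;
    destruct (Rlt_dec _ _); reflexivity.
Qed.

Lemma bound_ge rho p k l m : 0 < rho -> admissible rho p k l m ->
  (k <= Defs.bound rho p)%nat /\ (l <= Defs.bound rho p)%nat.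
Proof.
  intros Hrho [Hk [Hml Hlt]]. unfold Defs.bound.
  pose proof (pos_INR k). pose proof (pos_INR l).
  destruct (archimed (p / rho)) as [H1 _]. destruct (archimed p) as [H2 _].
  assert (Hk' : INR k < p / rho).
  { apply Rmult_lt_reg_r with rho; auto. unfold Rdiv. rewrite Rmult_assoc, Rinv_l by lra. nra. }
  assert (Hl' : INR l < p) by nra.
  rewrite INR_IZR_INZ in Hk', Hl'.
  assert (A1 : (Z.of_nat k < up (p / rho))%Z) by (apply lt_IZR; lra).
  assert (A2 : (Z.of_nat l < up p)%Z) by (apply lt_IZR; lra).
  split; lia.
Qed.

Theorem lemma4p4 (rho p : R) (a : nat -> nat -> nat -> C)
  (Hrho : 0 < rho) (Hirr : irrational rho) (Hp : 0 < p)
  (HO : exists (M : R) (N : nat), forall n : nat, (N <= n)%nat ->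
          Cmod (adm_sum rho p a n) <= M * Rpower (INR n) (- p)) :
  forall k l m : nat, admissible rho p k l m -> a k l m = RtoC 0.
Proof.
  intros k0 l0 m0 Hadm.
  set (L := List.filter (condb rho p) (Lfull (Defs.bound rho p))).
  assert (HOH : OH (ee rho) mmf p (cc a) L).
  { destruct HO as [M [N H]]. exists M, N. intros n Hn. unfold L. rewrite <- adm_eq. auto. }
  assert (Hlt : forall t, In t L -> ee rho t < p).
  { intros t Ht. apply filter_In in Ht. destruct t as [[k l] m]. simpl in *.
    destruct Ht as [_ Hc]. apply andb_prop in Hc. destruct Hc as [_ Hc].
    destruct (Rlt_dec _ _); [auto|discriminate]. }
  pose proof (Lmain (ee rho) mmf p (length L) L (cc a) (le_n _) Hlt HOH (ee rho (k0, l0, m0)) m0) as HZ.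
  rewrite <- HZ. symmetry.
  set (body := fun t : T3 => if condb rho p t then
      (if sel (ee rho) mmf (ee rho (k0, l0, m0)) m0 t then cc a t else RtoC 0) else RtoC 0).
  assert (Hzero : forall t, t <> (k0, l0, m0) -> body t = RtoC 0).
  { intros [[k l] m] Hne. unfold body.
    destruct (condb rho p (k, l, m)); [|reflexivity].
    destruct (sel (ee rho) mmf (ee rho (k0, l0, m0)) m0 (k, l, m)) eqn:Hs; [|reflexivity].
    exfalso. unfold sel in Hs. destruct (Req_EM_T _ _) as [He|]; [|discriminate].
    apply Nat.eqb_eq in Hs. simpl in He, Hs.
    assert (He' : INR k * rho + INR l = INR k0 * rho + INR l0) by lra.
    destruct (irr_inj rho _ _ _ _ Hirr He') as [-> ->]. subst. auto. }
  assert (Hbody : body (k0, l0, m0) = a k0 l0 m0).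
  { unfold body, condb. destruct Hadm as [Hk [Hml Hlt0]].
    rewrite (proj2 (Nat.leb_le 1 k0) Hk), (proj2 (Nat.leb_le _ _) Hml).
    destruct (Rlt_dec _ _) as [_|n]; [|contradiction]. simpl andb. cbv iota.
    unfold sel. destruct (Req_EM_T _ _) as [_|n]; [|contradiction].
    simpl. rewrite Nat.eqb_refl. reflexivity. }
  destruct (bound_ge rho p k0 l0 m0 Hrho Hadm) as [Bk Bl].
  assert (Hm0 : (m0 <= l0)%nat) by (destruct Hadm as [_ [H _]]; auto).
  unfold L. rewrite lsum_filter. unfold Lfull. rewrite lsum_flat_map, lsum_seq.
  rewrite (sum_n_delta _ k0); auto.
  - rewrite lsum_flat_map, lsum_seq. rewrite (sum_n_delta _ l0); auto.
    + rewrite lsum_map, lsum_seq. rewrite (sum_n_delta _ m0); auto.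
      intros i Hi. apply Hzero. congruence.
    + intros i Hi. rewrite lsum_map, lsum_seq. apply sum_n_zero_loc. intros j _.
      apply Hzero. congruence.
  - intros i Hi. rewrite lsum_flat_map, lsum_seq. apply sum_n_zero_loc. intros j _.
    rewrite lsum_map, lsum_seq. apply sum_n_zero_loc. intros q _. apply Hzero. congruence.
Qed.
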